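(* Let $M$ be a finite monoid and $A$ a finite subset of $M$ with $A\cap U(M)\neq\emptyset$, where $U(M)$ is the set of invertible elements of $M$. Let $V=\mathbb{C}\langle\overline{A}\rangle\subseteq\mathbb{C}[M]$. Then for every $0<\lambda\leq1$, the unique atom $\mathcal{H}_\lambda$ of $V$ containing $1$ is a subalgebra of $\mathbb{C}[M]$ which contains $\mathcal{H}_l(A):=\{x\in\mathbb{C}[M]\mid x\overline{A}\subseteq\mathbb{C}\langle\overline{A}\rangle\}$ and satisfies $|BA|\geq|A|+\lambda|B|-\lambda\dim_{\mathbb{C}}(\mathcal{H}_\lambda)$ and $\dim_{\mathbb{C}}(\mathcal{H}_\lambda)\geq|H_A|$ for every finite subset $B$ of $M$ with $B\cap U(M)\neq\emptyset$. In particular $|BA|\geq|A|+|B|-\dim_{\mathbb{C}}(\mathcal{H}_1)$ and $\dim_{\mathbb{C}}(\mathcal{H}_1)\geq|H_A|$.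
   Context: $\mathbb{C}[M]$ is the monoid algebra with basis $\{e_g\mid g\in M\}$ and $e_ge_{g'}=e_{gg'}$; for $S\subseteq M$, $\overline{S}=\{e_s\mid s\in S\}$, and $\mathbb{C}\langle\cdot\rangle$ is linear span. $BA=\{ba\mid b\in B,a\in A\}\subseteq M$. $H_A=\{h\in M\mid hA=A\}$. Connectivity relative to $V$ and $\lambda$: for a finite-dimensional subspace $W\subseteq\mathbb{C}[M]$, $c(W)=\dim_{\mathbb{C}}\mathbb{C}\langle WV\rangle-\lambda\dim_{\mathbb{C}}W$ where $WV=\{wv\}$; $\kappa$ is the infimum of $c(W)$ over subspaces $W$ containing an invertible element of $\mathbb{C}[M]$; a fragment is such a $W$ with $c(W)=\kappa$; an atom is a fragment of minimal dimension (there is a unique atom containing $1$). *)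

(* Defs.v *)
From HB Require Import structures.
From mathcomp Require Import all_boot all_order all_algebra all_field.
From mathcomp Require Import complex.
From mathcomp Require Import reals.
Set Implicit Arguments. Unset Strict Implicit. Unset Printing Implicit Defensive.
Import Order.TTheory GRing.Theory Num.Theory.
Local Open Scope ring_scope.

Section MonoidAlgebra.
Variable R : realType.
Local Notation C := (R[i]).
Variable M : finType.
Variable mul : M -> M -> M.
Variable one : M.

Definition is_monoid : Prop :=
  [/\ associative mul, left_id one mul & right_id one mul].

(* the monoid algebra C[M], as the C-vector space of functions M -> C *)
Definition malg := {ffun M -> C^o}.

Definition ebase (g : M) : malg := [ffun h => (h == g)%:R].

(* multiplication in C[M]: extends e_g e_g' = e_{g g'} bilinearly *)
Definition mmul (x y : malg) : malg :=
  [ffun g => \sum_(a : M) \sum_(b : M | mul a b == g) x a * y b].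

Definition munit : malg := ebase one.

Definition alg_invertible (x : malg) : Prop :=
  exists y, mmul x y = munit /\ mmul y x = munit.

Definition units_of : {set M} :=
  [set u | [exists v, (mul u v == one) && (mul v u == one)]].

Definition spanS (S : {set M}) : {vspace malg} :=
  <<[seq ebase s | s <- enum S]>>%VS.

(* C<W V> : the linear span of {w v | w in W, v in V}; by bilinearity it is
   spanned by the products of basis vectors (as for falgebra's (U * V)%VS) *)
Definition prodv (W V : {vspace malg}) : {vspace malg} :=
  <<allpairs mmul (vbasis W) (vbasis V)>>%VS.

Definition conn (V : {vspace malg}) (lam : R) (W : {vspace malg}) : R :=
  (\dim (prodv W V))%:R - lam * (\dim W)%:R.

Definition admissible (W : {vspace malg}) : Prop :=
  exists2 x, x \in W & alg_invertible x.

Definition kappa (V : {vspace malg}) (lam : R) : R :=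
  inf (fun r : R => exists W, admissible W /\ r = conn V lam W).

Definition fragment (V : {vspace malg}) (lam : R) (W : {vspace malg}) : Prop :=
  admissible W /\ conn V lam W = kappa V lam.

Definition atom (V : {vspace malg}) (lam : R) (W : {vspace malg}) : Prop :=
  fragment V lam W /\
  forall W', fragment V lam W' -> (\dim W <= \dim W')%N.

Definition subalgebra (W : {vspace malg}) : Prop :=
  munit \in W /\ forall x y, x \in W -> y \in W -> mmul x y \in W.

Definition Hl (A : {set M}) : malg -> Prop :=
  fun x => forall a, a \in A -> mmul x (ebase a) \in spanS A.

Definition setmul (B A : {set M}) : {set M} :=
  [set mul b a | b in B, a in A].

Definition stabA (A : {set M}) : {set M} :=
  [set h | setmul [set h] A == A].

End MonoidAlgebra.

(* Main.v *)
Require Import Defs.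
From HB Require Import structures.
From mathcomp Require Import all_boot all_order all_algebra all_field.
From mathcomp Require Import complex.
From mathcomp Require Import reals.
From mathcomp Require classical_sets.
From mathcomp Require Import lra.
From Stdlib Require Import Classical.
Import Order.TTheory GRing.Theory Num.Theory.
Local Open Scope ring_scope.
Set Implicit Arguments. Unset Strict Implicit. Unset Printing Implicit Defensive.

Section Alg.
Variable R : realType.
Variable M : finType.
Variable mul : M -> M -> M.
Variable one : M.
Hypothesis HM : is_monoid mul one.
Local Notation C := (R[i]).
Local Notation A := (malg R M).
Local Notation e := (@ebase R M).
Local Notation mm := (@mmul R M mul).
Local Notation u1 := (munit R one).
Local Notation prodv := Defs.prodv.

Lemma mmulE (x y : A) g : mm x y g = \sum_a \sum_(b | mul a b == g) x a * y b.
Proof. by rewrite ffunE. Qed.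

Lemma mmul_linr (x : A) : linear (mm x).
Proof.
move=> c y z; apply/ffunP => g; rewrite !ffunE.
rewrite scaler_sumr -big_split /=; apply: eq_bigr => a _.
rewrite scaler_sumr -big_split /=; apply: eq_bigr => b _.
by rewrite !ffunE mulrDr mulrCA.
Qed.

Lemma mmul_linl (y : A) : linear (mm ^~ y).
Proof.
move=> c x z; apply/ffunP => g; rewrite !ffunE.
rewrite scaler_sumr -big_split /=; apply: eq_bigr => a _.
rewrite scaler_sumr -big_split /=; apply: eq_bigr => b _.
by rewrite !ffunE mulrDl -!mulrA.
Qed.

Lemma sum_pred1 (F : M -> C) k : \sum_a (if a == k then F a else 0) = F k.
Proof. by rewrite -big_mkcond big_pred1_eq. Qed.

Lemma reorder4 (F : M -> M -> M -> M -> C) :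
  \sum_a \sum_b \sum_c \sum_d F a b c d = \sum_c \sum_d \sum_b \sum_a F a b c d.
Proof.
rewrite exchange_big /=.
under eq_bigr => b _ do rewrite exchange_big /=.
under eq_bigr => b _ do under eq_bigr => c _ do rewrite exchange_big /=.
rewrite exchange_big /=.
by under eq_bigr => c _ do rewrite exchange_big /=.
Qed.

Lemma reorder4' (F : M -> M -> M -> M -> C) :
  \sum_c \sum_f \sum_d \sum_b F c f d b = \sum_c \sum_d \sum_b \sum_f F c f d b.
Proof.
apply: eq_bigr => c _.
rewrite exchange_big /=.
by under eq_bigr => d _ do rewrite exchange_big /=.
Qed.

Lemma mmulA : associative mm.
Proof.
case: HM => Hass _ _.
move=> x y z; apply/ffunP => g.
have E1 : mm (mm x y) z g = \sum_c \sum_d \sum_b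
   (if mul (mul c d) b == g then x c * y d * z b else 0).
  rewrite ffunE.
  transitivity (\sum_a \sum_b \sum_c \sum_d
     (if (mul c d == a) && (mul a b == g) then x c * y d * z b else 0)).
    apply: eq_bigr => a _; rewrite big_mkcond /=; apply: eq_bigr => b _.
    rewrite ffunE big_distrl /=; case: eqP => _.
      apply: eq_bigr => c _; rewrite big_distrl big_mkcond /=; apply: eq_bigr => d _.
      by rewrite andbT; case: eqP.
    by rewrite big1 // => c _; rewrite big1 // => d _; rewrite andbF.
  rewrite reorder4; apply: eq_bigr => c _; apply: eq_bigr => d _; apply: eq_bigr => b _.
  rewrite (bigD1 (mul c d)) //= eqxx /= big1 ?addr0 // => a /negbTE na.
  by rewrite eq_sym na.
have E2 : mm x (mm y z) g = \sum_c \sum_d \sum_b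
   (if mul c (mul d b) == g then x c * y d * z b else 0).
  rewrite ffunE.
  transitivity (\sum_c \sum_f \sum_d \sum_b
     (if (mul d b == f) && (mul c f == g) then x c * y d * z b else 0)).
    apply: eq_bigr => c _; rewrite big_mkcond /=; apply: eq_bigr => f _.
    rewrite ffunE big_distrr /=; case: eqP => _.
      apply: eq_bigr => d _; rewrite big_distrr big_mkcond /=; apply: eq_bigr => b _.
      by rewrite andbT mulrA; case: eqP.
    by rewrite big1 // => d _; rewrite big1 // => b _; rewrite andbF.
  rewrite reorder4'; apply: eq_bigr => c _; apply: eq_bigr => d _; apply: eq_bigr => b _.
  rewrite (bigD1 (mul d b)) //= eqxx /= big1 ?addr0 // => f /negbTE nf.
  by rewrite eq_sym nf.
rewrite E1 E2; apply: eq_bigr => c _; apply: eq_bigr => d _; apply: eq_bigr => b _.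
by rewrite Hass.
Qed.


Lemma e_mul g h : mm (e g) (e h) = e (mul g h).
Proof.
apply/ffunP => k; rewrite [LHS]ffunE [RHS]ffunE.
transitivity (\sum_a (if a == g then \sum_(b | mul a b == k) ((b == h)%:R : C) else 0)).
  apply: eq_bigr => a _; rewrite ffunE; case: eqP => _.
    by apply: eq_bigr => b _; rewrite ffunE mul1r.
  by rewrite big1 // => b _; rewrite mul0r.
rewrite (sum_pred1 (fun a => \sum_(b | mul a b == k) ((b == h)%:R : C))).
rewrite big_mkcond /=.
transitivity (\sum_b (if b == h then ((mul g b == k)%:R : C) else 0)).
  by apply: eq_bigr => b _; case: eqP => _; case: eqP.
by rewrite (sum_pred1 (fun b => ((mul g b == k)%:R : C))) eq_sym.
Qed.

HB.instance Definition _ (x : A) :=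
  GRing.isLinear.Build C A A *:%R (mm x) (mmul_linr x).

Definition Lm (x : A) : 'End(A) := linfun (mm x).
Lemma LmE x v : Lm x v = mm x v.
Proof. by rewrite lfunE. Qed.

Definition mmr (y : A) (x : A) := mm x y.
HB.instance Definition _ (y : A) :=
  GRing.isLinear.Build C A A *:%R (mmr y) (mmul_linl y).
Definition Rm (y : A) : 'End(A) := linfun (mmr y).
Lemma RmE y v : Rm y v = mm v y.
Proof. by rewrite lfunE. Qed.


Lemma mul1m (x : A) : mm u1 x = x.
Proof.
case: HM => _ H1 _.
apply/ffunP => k; rewrite [LHS]ffunE.
transitivity (\sum_a (if a == one then \sum_(b | mul a b == k) x b else 0)).
  apply: eq_bigr => a _; rewrite ffunE; case: eqP => _.
    by apply: eq_bigr => b _; rewrite mul1r.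
  by rewrite big1 // => b _; rewrite mul0r.
rewrite (sum_pred1 (fun a => \sum_(b | mul a b == k) x b)).
rewrite (eq_bigl (fun b => b == k)) ?big_pred1_eq // => b.
by rewrite H1.
Qed.

Lemma mulm1 (x : A) : mm x u1 = x.
Proof.
case: HM => _ _ H1.
apply/ffunP => k; rewrite [LHS]ffunE.
transitivity (\sum_a (if a == k then x a else 0)); last by rewrite sum_pred1.
apply: eq_bigr => a _.
transitivity (\sum_(b | mul a b == k) (if b == one then x a else 0)).
  by apply: eq_bigr => b _; rewrite ffunE; case: eqP => _; rewrite ?mulr1 ?mulr0.
rewrite big_mkcond /=.
transitivity (\sum_b (if b == one then (if a == k then x a else 0) else 0)).
  apply: eq_bigr => b _; have [->|nb] := eqVneq b one; first by rewrite ?eqxx H1.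
  by case: ifP.
by rewrite -big_mkcond /= big_pred1_eq.
Qed.

Lemma u1_inv : alg_invertible mul one u1.
Proof. by exists u1; rewrite mul1m. Qed.

Lemma inv_ker (u : A) : alg_invertible mul one u -> lker (Lm u) == 0%VS.
Proof.
case=> u' [_ Hu']; apply/lker0P => v w; rewrite !LmE => Hvw.
by rewrite -(mul1m v) -(mul1m w) -Hu' -!mmulA Hvw.
Qed.

Lemma ker_inv (u : A) : lker (Lm u) == 0%VS -> alg_invertible mul one u.
Proof.
move=> Hk.
have surj : forall f : 'End(A), lker f == 0%VS -> forall z, exists y, f y = z.
  move=> f Hf z.
  have : (f @: fullv)%VS = fullv.
    apply/eqP; rewrite eqEdim subvf /= limg_dim_eq //.
    by rewrite (eqP Hf) capv0.
  move=> Himg; have : z \in (f @: fullv)%VS by rewrite Himg memvf.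
  by case/memv_imgP => y _ ->; exists y.
have [y Hy] := surj _ Hk u1; rewrite LmE in Hy.
have Hky : lker (Lm y) == 0%VS.
  apply/lker0P => v w; rewrite !LmE => Hvw.
  by rewrite -(mul1m v) -(mul1m w) -Hy -!mmulA Hvw.
have [z Hz] := surj _ Hky u1; rewrite LmE in Hz.
have uz : u = z by rewrite -(mulm1 u) -Hz mmulA Hy mul1m.
by exists y; split => //; rewrite uz.
Qed.

Lemma span_bilin (X Y : seq A) (Z : {vspace A}) :
  (forall x y, x \in X -> y \in Y -> mm x y \in Z) ->
  forall w v, w \in <<X>>%VS -> v \in <<Y>>%VS -> mm w v \in Z.
Proof.
move=> H w v Hw Hv.
have H1 : forall x, x \in X -> mm x v \in Z.
  move=> x Hx; have : (Lm x @: <<Y>> <= Z)%VS.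
    rewrite limg_span; apply/span_subvP => z /mapP [y Hy ->].
    by rewrite LmE H.
  by move/subvP => H2; rewrite -LmE; apply: H2; apply: memv_img.
have : (Rm v @: <<X>> <= Z)%VS.
  rewrite limg_span; apply/span_subvP => z /mapP [x Hx ->].
  by rewrite RmE H1.
by move/subvP => H2; rewrite -RmE; apply: H2; apply: memv_img.
Qed.

Lemma memv_prodv (W V : {vspace A}) w v :
  w \in W -> v \in V -> mm w v \in prodv mul W V.
Proof.
rewrite -{1}(span_basis (vbasisP W)) -{1}(span_basis (vbasisP V)).
apply: span_bilin => x y Hx Hy; apply: memv_span.
by apply: allpairs_f.
Qed.

Lemma prodv_sub (W V Z : {vspace A}) :
  (forall w v, w \in W -> v \in V -> mm w v \in Z) -> (prodv mul W V <= Z)%VS.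
Proof.
move=> H; apply/span_subvP => z /allpairsP [[x y] [/= Hx Hy ->]].
by apply: H; apply: vbasis_mem.
Qed.

Lemma prodvS (W1 W2 V : {vspace A}) : (W1 <= W2)%VS ->
  (prodv mul W1 V <= prodv mul W2 V)%VS.
Proof.
move=> /subvP H; apply: prodv_sub => w v Hw Hv.
by apply: memv_prodv => //; apply: H.
Qed.

Lemma prodvD (W1 W2 V : {vspace A}) :
  prodv mul (W1 + W2) V = (prodv mul W1 V + prodv mul W2 V)%VS.
Proof.
apply/eqP; rewrite eqEsubv; apply/andP; split.
  apply: prodv_sub => w v /memv_addP [w1 H1 [w2 H2 ->]] Hv.
  rewrite -RmE linearD /= !RmE.
  by apply: memv_add; apply: memv_prodv.
by rewrite subv_add !prodvS // ?addvSl ?addvSr.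
Qed.

Lemma prodv_img (u : A) (W V : {vspace A}) :
  prodv mul (Lm u @: W) V = (Lm u @: prodv mul W V)%VS.
Proof.
apply/eqP; rewrite eqEsubv; apply/andP; split.
  apply: prodv_sub => w v /memv_imgP [w0 Hw0 ->] Hv.
  by rewrite LmE -mmulA -LmE; apply: memv_img; apply: memv_prodv.
rewrite limg_span; apply/span_subvP => z /mapP [y /allpairsP [[a b] [/= Ha Hb ->]] ->].
rewrite LmE mmulA; apply: memv_prodv; last exact: vbasis_mem.
by rewrite -LmE; apply: memv_img; apply: vbasis_mem.
Qed.

Lemma V_sub_prodv (W V : {vspace A}) : u1 \in W -> (V <= prodv mul W V)%VS.
Proof.
move=> H1; apply/subvP => v Hv; rewrite -(mul1m v).
exact: memv_prodv.
Qed.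


Lemma free_e (s : seq M) : uniq s -> free (map e s).
Proof.
elim: s => [|x s IH] /=; first by rewrite nil_free.
case/andP => xs us; rewrite free_cons IH // andbT.
apply/negP => Hin.
have := coord_span (X := in_tuple [seq e i | i <- s]) Hin => /(congr1 (fun f : A => f x)).
rewrite ffunE eqxx sum_ffunE big1 ?oner_eq0 //; last first.
  move=> i _; rewrite ffunE (nth_map one); last by rewrite -(size_map e).
  rewrite ffunE; case: eqP => [Hx|_]; last by rewrite /= scaler0.
  by move: xs; rewrite Hx mem_nth // -(size_map e).
by move/eqP; rewrite oner_eq0.
Qed.

Lemma dim_spanS (S : {set M}) : \dim (spanS R S) = #|S|.
Proof.
rewrite /spanS; have := free_e (enum_uniq (mem S)).
by rewrite /free => /eqP ->; rewrite size_map cardE.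
Qed.

Lemma mem_eig (h v : A) (c : C) :
  (v \in passmx.leigenspace (Lm h) c) = ((Lm h - c *: \1%VF) v == 0).
Proof. by rewrite /passmx.leigenspace memv_ker. Qed.

Lemma ker_of_eig (h : A) (t : C) : t != 0 ->
  passmx.leigenspace (Lm h) (- t^-1) == 0%VS -> lker (Lm (u1 + t *: h)) == 0%VS.
Proof.
move=> tn0 Hz; apply/lker0P => v0 w0; rewrite !LmE => E.
apply/eqP; rewrite -subr_eq0; set v := v0 - w0.
have H : mm (u1 + t *: h) v = 0.
  by rewrite /v -LmE linearB /= !LmE E subrr.
have : v \in passmx.leigenspace (Lm h) (- t^-1).
  rewrite mem_eig add_lfunE opp_lfunE scale_lfunE id_lfunE !LmE.
  have Ht : t *: mm h v = - v.
    move: H; rewrite -RmE linearD linearZ /= !RmE mul1m => /eqP.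
    by rewrite addrC addr_eq0 => /eqP.
  have -> : mm h v = t^-1 *: (t *: mm h v) by rewrite scalerA mulVf // scale1r.
  by rewrite Ht scaleNr opprK scalerN addNr.
by rewrite (eqP Hz) memv0.
Qed.

Lemma exists_t (h : A) : exists t : C, t != 0 /\ lker (Lm (u1 + t *: h)) == 0%VS.
Proof.
pose E := vbasis (fullv : {vspace A}).
have EB : basis_of fullv E := vbasisP fullv.
pose Mx := passmx.mxof E E (Lm h).
pose m := \dim (fullv : {vspace A}).
pose a (k : nat) : C := - ((k.+1)%:R : C)^-1.
have : ~~ all (root (char_poly Mx)) (map a (iota 0 m.+1)).
  apply/negP => Hall.
  have Hu : uniq (map a (iota 0 m.+1)).
    rewrite map_inj_uniq ?iota_uniq // => i j.
    by rewrite /a => /oppr_inj /invr_inj /eqP; rewrite eqr_nat eqSS => /eqP.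
  have := max_poly_roots (monic_neq0 (char_poly_monic Mx)) Hall Hu.
  by rewrite size_map size_iota size_char_poly ltnn.
case/allPn => _ /mapP [k _ ->] Hnr.
have tn0 : ((k.+1)%:R : C) != 0 by rewrite pnatr_eq0.
exists (k.+1)%:R; split => //; apply: ker_of_eig => //.
rewrite (passmx.leigenspaceE EB) passmx.vsof_eq0 //.
by move: Hnr; rewrite -eigenvalue_root_char /eigenvalue /= => /negPn.
Qed.


Lemma conn_lb (V : {vspace A}) lam W : 0 <= lam ->
  - lam * (\dim (fullv : {vspace A}))%:R <= conn mul V lam W.
Proof.
move=> l0; rewrite /conn.
have H1 : lam * (\dim W)%:R <= lam * (\dim (fullv : {vspace A}))%:R.
  by rewrite ler_wpM2l // ler_nat dimvS // subvf.
have H2 : (0 : R) <= (\dim (prodv mul W V))%:R by rewrite ler0n.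
lra.
Qed.

Lemma kappa_le (V : {vspace A}) lam W : 0 <= lam -> admissible mul one W ->
  kappa mul one V lam <= conn mul V lam W.
Proof.
move=> l0 HW; apply: ge_inf; last by exists W.
exists (- lam * (\dim (fullv : {vspace A}))%:R) => r [W0 [_ ->]].
exact: conn_lb.
Qed.

Lemma min_in_seq (P : R -> Prop) (s : seq R) : (exists2 x, x \in s & P x) ->
  exists m, P m /\ forall y, y \in s -> P y -> m <= y.
Proof.
elim: s => [|x s IH]; first by case.
move=> Hex; case: (classic (exists2 y, y \in s & P y)) => [/IH [m [Pm Hm]]|Hn].
  case: (classic (P x)) => Px.
    case: (lerP x m) => Hxm.
      exists x; split => // y; rewrite in_cons => /orP [/eqP ->//|ys Py].
      exact: le_trans Hxm (Hm _ ys Py).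
    exists m; split => // y; rewrite in_cons => /orP [/eqP ->_|ys Py].
      exact: ltW.
    exact: Hm.
  exists m; split => // y; rewrite in_cons => /orP [/eqP -> //|ys Py].
  exact: Hm.
have Px : P x.
  apply: NNPP => nPx; apply: Hn.
  by case: Hex => y; rewrite in_cons => /orP [/eqP ->|]; [|exists y].
exists x; split => // y; rewrite in_cons => /orP [/eqP -> //|ys Py].
by case: Hn; exists y.
Qed.

Lemma fragment_exists (V : {vspace A}) lam : 0 <= lam ->
  exists W, fragment mul one V lam W.
Proof.
move=> l0.
pose n := \dim (fullv : {vspace A}).
pose S := (fun r : R => exists W, admissible mul one W /\ r = conn mul V lam W).
pose L := [seq (i%:R - lam * j%:R : R) | i <- iota 0 n.+1, j <- iota 0 n.+1].
have SL : forall W, conn mul V lam W \in L.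
  move=> W; apply/allpairsP; exists (\dim (prodv mul W V), \dim W).
  by split; rewrite ?mem_iota ?add0n ?ltnS ?dimvS ?subvf.
have adm_full : admissible mul one (fullv : {vspace A}) by exists u1; [exact: memvf|exact: u1_inv].
have [m [[W [HW ->]] Hm]] : exists m, S m /\ forall y, y \in L -> S y -> m <= y.
  apply: min_in_seq; exists (conn mul V lam fullv) => //.
  by exists fullv.
exists W; split => //; apply/eqP; rewrite eq_le kappa_le // andbT.
apply: lb_le_inf; first by exists (conn mul V lam W); exists W.
by move=> r [W0 [HW0 ->]]; apply: Hm => //; exists W0.
Qed.

Lemma atom_exists (V : {vspace A}) lam : 0 <= lam -> exists H, atom mul one V lam H.
Proof.
move=> l0; have [W FW] := fragment_exists V l0.
pose P n := exists W, fragment mul one V lam W /\ \dim W = n.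
suff : forall n, P n -> exists m, P m /\ forall k, P k -> (m <= k)%N.
  case/(_ (\dim W)); first by exists W.
  move=> m [[H [FH <-]] Hm]; exists H; split => // W' FW'.
  by apply: Hm; exists W'.
elim/ltn_ind => n IH Pn.
case: (classic (exists k, (k < n)%N /\ P k)) => [[k [kn Pk]]|Hn].
  exact: IH kn Pk.
exists n; split => // k Pk; rewrite leqNgt; apply/negP => kn.
by apply: Hn; exists k.
Qed.

Lemma dim_img u (W : {vspace A}) : lker (Lm u) == 0%VS -> \dim (Lm u @: W) = \dim W.
Proof. by move=> Hk; rewrite limg_dim_eq // (eqP Hk) capv0. Qed.

Lemma conn_img (V : {vspace A}) lam u W : lker (Lm u) == 0%VS ->
  conn mul V lam (Lm u @: W) = conn mul V lam W.
Proof. by move=> Hk; rewrite /conn prodv_img !dim_img. Qed.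

Lemma frag_cap (V : {vspace A}) lam X Y : 0 <= lam ->
  fragment mul one V lam X -> fragment mul one V lam Y ->
  admissible mul one (X :&: Y) -> admissible mul one (X + Y) ->
  fragment mul one V lam (X :&: Y).
Proof.
move=> l0 [_ FX] [_ FY] Hc Hs; split => //; apply/eqP; rewrite eq_le kappa_le // andbT.
have K := kappa_le V l0 Hs.
move: FX FY K; rewrite /conn => FX FY K.
have E1 := dimv_sum_cap X Y.
have E2 := dimv_sum_cap (prodv mul X V) (prodv mul Y V).
have I1 : (\dim (prodv mul (X :&: Y) V) <= \dim (prodv mul X V :&: prodv mul Y V))%N.
  by rewrite dimvS // subv_cap !prodvS // ?capvSl ?capvSr.
rewrite prodvD in K.
have E1' : lam * (\dim (X + Y))%:R + lam * (\dim (X :&: Y))%:R =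
   lam * (\dim X)%:R + lam * (\dim Y)%:R by rewrite -!mulrDr -!natrD E1.
have E2' : ((\dim (prodv mul X V + prodv mul Y V))%:R : R) +
   (\dim (prodv mul X V :&: prodv mul Y V))%:R =
   (\dim (prodv mul X V))%:R + (\dim (prodv mul Y V))%:R by rewrite -!natrD E2.
have I1' : ((\dim (prodv mul (X :&: Y) V))%:R : R) <=
   (\dim (prodv mul X V :&: prodv mul Y V))%:R by rewrite ler_nat.
lra.
Qed.

Lemma sub_dim_eq (U W : {vspace A}) : (U <= W)%VS -> (\dim W <= \dim U)%N -> (W <= U)%VS.
Proof. by move=> sUW dWU; have /eqP <- : U == W by rewrite eqEdim sUW. Qed.

Lemma atom_stable (V : {vspace A}) lam H u : 0 <= lam ->
  atom mul one V lam H -> u1 \in H -> u \in H -> lker (Lm u) == 0%VS ->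
  forall y, y \in H -> mm u y \in H.
Proof.
move=> l0 [FH Hmin] H1 uH Hk y yH.
have [Y defY] : {Y | Y = (Lm u @: H)%VS} by exists (Lm u @: H)%VS.
have uY : u \in Y by have := memv_img (Lm u) H1; rewrite LmE mulm1 defY.
have dY : \dim Y = \dim H by rewrite defY dim_img.
have FY : fragment mul one V lam Y.
  case: FH => _ FH; split; last by rewrite defY conn_img.
  by exists u => //; apply: ker_inv.
have cap_u : u \in (H :&: Y)%VS by rewrite memv_cap uH uY.
have FC := frag_cap l0 (conj (proj1 FH) (proj2 FH)) FY
  (ex_intro2 _ _ u cap_u (ker_inv Hk))
  (ex_intro2 _ _ u1 (subvP (addvSl H Y) _ H1) u1_inv).
have HC := Hmin _ FC.
have HsC : (H <= H :&: Y)%VS by apply: sub_dim_eq; rewrite ?capvSl.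
have HsY : (H <= Y)%VS by move: HsC; rewrite subv_cap => /andP [].
have YsH : (Y <= H)%VS by apply: sub_dim_eq; rewrite ?dY.
have yY : mm u y \in Y by rewrite defY -LmE memv_img.
exact: (subvP YsH).
Qed.


Lemma atom_subalg (V : {vspace A}) lam H : 0 <= lam ->
  atom mul one V lam H -> u1 \in H -> subalgebra mul one H.
Proof.
move=> l0 AH H1; split => // h y hH yH.
have [t [tn0 Hk]] := exists_t h.
have uH : u1 + t *: h \in H by rewrite memvD // memvZ.
have := atom_stable l0 AH H1 uH Hk yH.
have -> : mm (u1 + t *: h) y = y + t *: mm h y.
  by rewrite -RmE linearD linearZ /= !RmE mul1m.
move=> Hs; have := memvB Hs yH; rewrite addrC addKr => Ht.
have -> : mm h y = t^-1 *: (t *: mm h y) by rewrite scalerA mulVf // scale1r.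
exact: memvZ.
Qed.

Lemma Hl_sub lam (S : {set M}) H x : 0 < lam ->
  atom mul one (spanS R S) lam H -> u1 \in H -> Hl mul S x -> x \in H.
Proof.
move=> l0 [[_ FH] _] H1 Hx; apply/negPn/negP => nx.
have admW : admissible mul one (H + <[x]>)%VS.
  by exists u1; [exact: (subvP (addvSl H <[x]>%VS))|exact: u1_inv].
have K := kappa_le (spanS R S) (ltW l0) admW.
have xV : forall v, v \in spanS R S -> mm x v \in spanS R S.
  move=> v Hv; apply: (span_bilin (X := [:: x]) _ (memv_span (mem_head x [::])) Hv).
  move=> x0 y; rewrite inE => /eqP -> /mapP [a Ha ->].
  by apply: Hx; rewrite -mem_enum.
have PE : prodv mul (H + <[x]>)%VS (spanS R S) = prodv mul H (spanS R S).
  apply/eqP; rewrite eqEsubv; apply/andP; split; last by apply: prodvS; apply: addvSl.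
  rewrite prodvD subv_add subvv /=.
  apply: subv_trans (V_sub_prodv _ H1).
  apply: prodv_sub => w v /vlineP [c ->] Hv.
  by rewrite -RmE linearZ /= RmE memvZ // xV.
have Hd : (\dim H < \dim (H + <[x]>))%N.
  rewrite ltnNge; apply/negP => Hle.
  have := sub_dim_eq (addvSl H <[x]>%VS) Hle.
  by rewrite subv_add => /andP [_]; rewrite -memvE => xH; rewrite xH in nx.
move: K; rewrite /conn PE -FH /conn => K.
have : lam * (\dim H)%:R < lam * (\dim (H + <[x]>))%:R by rewrite ltr_pM2l // ltr_nat.
lra.
Qed.


Lemma prodv_spanS (B S : {set M}) :
  (\dim (prodv mul (spanS R B) (spanS R S)) <= #|setmul mul B S|)%N.
Proof.
rewrite -dim_spanS; apply: dimvS; apply: prodv_sub => w v Hw Hv.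
apply: (span_bilin _ Hw Hv) => x y /mapP [b Hb ->] /mapP [a Ha ->].
rewrite e_mul; apply: memv_span; apply: map_f.
rewrite mem_enum; apply: imset2_f; by rewrite -mem_enum.
Qed.

Lemma stab_sub lam (S : {set M}) H : 0 < lam ->
  atom mul one (spanS R S) lam H -> u1 \in H -> (#|stabA mul S| <= \dim H)%N.
Proof.
move=> l0 AH H1; rewrite -dim_spanS; apply: dimvS; apply/span_subvP => z /mapP [h hS ->].
apply: (Hl_sub l0 AH H1) => a aS.
rewrite e_mul; apply: memv_span; apply: map_f; rewrite mem_enum.
move: hS; rewrite mem_enum inE => /eqP <-.
exact: (imset2_f _ (set11 h) aS).
Qed.

Lemma ineq_B lam (S : {set M}) H (B : {set M}) : 0 <= lam ->
  atom mul one (spanS R S) lam H -> u1 \in H -> B :&: units_of mul one != set0 ->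
  #|S|%:R + lam * #|B|%:R - lam * (\dim H)%:R <= (#|setmul mul B S|%:R : R).
Proof.
move=> l0 [[_ FH] _] H1 HB.
case/set0Pn: HB => b; rewrite !inE => /andP [bB /existsP [v /andP [/eqP bv /eqP vb]]].
have admB : admissible mul one (spanS R B).
  exists (e b); first by apply: memv_span; apply: map_f; rewrite mem_enum.
  by exists (e v); rewrite !e_mul bv vb.
have K := kappa_le (spanS R S) l0 admB.
move: K; rewrite -FH /conn dim_spanS => K.
have I1 := prodv_spanS B S.
have I2 : (\dim (spanS R S) <= \dim (prodv mul H (spanS R S)))%N.
  exact: dimvS (V_sub_prodv _ H1).
rewrite dim_spanS in I2.
have I1' : ((\dim (prodv mul (spanS R B) (spanS R S)))%:R : R) <= #|setmul mul B S|%:R.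
  by rewrite ler_nat.
have I2' : (#|S|%:R : R) <= (\dim (prodv mul H (spanS R S)))%:R by rewrite ler_nat.
lra.
Qed.

End Alg.

Theorem theorem7p2 (R : realType) (M : finType) (mul : M -> M -> M) (one : M)
  (HM : is_monoid mul one) (A : {set M})
  (HA : A :&: units_of mul one != set0) (lam : R)
  (Hlam0 : 0 < lam) (Hlam1 : lam <= 1) :
  let V := spanS R A in
  (exists H, atom mul one V lam H /\ munit R one \in H) /\
  forall H, atom mul one V lam H -> munit R one \in H ->
    [/\ subalgebra mul one H,
        (forall x, Hl mul A x -> x \in H),
        (forall B : {set M}, B :&: units_of mul one != set0 ->
            (#|setmul mul B A|%:R : R) >=
              #|A|%:R + lam * #|B|%:R - lam * (\dim H)%:R)
      & (#|stabA mul A| <= \dim H)%N].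
Proof.
move=> V.
have l0 := ltW Hlam0.
split.
  have [Z [[[x xZ [x' [Hxx' Hx'x]]] FZ] Zmin]] := atom_exists HM V l0.
  have Hk : lker (Lm mul x') == 0%VS by apply: (inv_ker HM); exists x.
  have u1W : munit R one \in (Lm mul x' @: Z)%VS.
    by have := memv_img (Lm mul x') xZ; rewrite LmE Hx'x.
  exists (Lm mul x' @: Z)%VS; split => //.
  split.
    split; first by exists (munit R one) => //; exact: u1_inv HM.
    by rewrite (conn_img HM).
  by move=> W' FW'; rewrite dim_img //; apply: Zmin.
move=> H AH H1; split.
- by eapply atom_subalg; eauto.
- by move=> x Hx; eapply Hl_sub; eauto.
- by move=> B HB; eapply ineq_B; eauto.
- by eapply stab_sub; eauto.
Qed.
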